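(* If $\mathfrak{X}$ is a finite co-tree which validates $\mathcal{J}(\mathfrak{F}_3)$, then every point $x\in X$ has at most $2$ immediate predecessors.
   Context: A co-tree is a poset with a greatest element in which every principal upset $\uparrow x$ is a chain. An immediate predecessor of $x$ is a point $y<x$ such that no $z$ satisfies $y<z<x$. $\mathfrak{F}_3$ is the four-element co-tree with top $a$ and three pairwise incomparable minimal points $b,c,d$ below $a$. For a finite co-tree $\mathfrak{Y}$, the Jankov formula $\mathcal{J}(\mathfrak{Y})$ is a bi-intuitionistic formula with the property that a finite co-tree $\mathfrak{X}$ (viewed as a Kripke frame, with $\leftarrow$ interpreted by $x\models\varphi\leftarrow\psi$ iff there is $y\le x$ with $y\models\varphi$ and $y\not\models\psi$) refutes $\mathcal{J}(\mathfrak{Y})$ iff there is a surjective bi-p-morphism $\mathfrak{X}\to\mathfrak{Y}$. A bi-p-morphism is an order-preserving map $f$ such that $f(x)\le y$ implies $y=f(z)$ for some $z\ge x$, and $y\le f(x)$ implies $y=f(z)$ for some $z\le x$. *)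

(* Defs.v *)
From mathcomp Require Import all_boot.
Set Implicit Arguments. Unset Strict Implicit. Unset Printing Implicit Defensive.

Definition is_poset (T : finType) (le : rel T) : Prop :=
  [/\ reflexive le, antisymmetric le & transitive le].

Definition is_cotree (T : finType) (le : rel T) : Prop :=
  [/\ is_poset le,
      (exists t : T, forall x, le x t) &
      (forall x y z : T, le x y -> le x z -> le y z || le z y)].

Definition imm_pred (T : finType) (le : rel T) (y x : T) : bool :=
  [&& le y x, y != x &
      ~~ [exists z, [&& le y z, z != y, le z x & z != x]]].

Inductive biform : Type :=
| BVar : nat -> biform
| BBot : biform
| BTop : biform
| BAnd : biform -> biform -> biform
| BOr  : biform -> biform -> biform
| BImp : biform -> biform -> biform
| BCoimp : biform -> biform -> biform.

Definition is_valuation (T : finType) (le : rel T) (V : nat -> T -> bool) : Prop :=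
  forall p x y, le x y -> V p x -> V p y.

Fixpoint sat (T : finType) (le : rel T) (V : nat -> T -> bool) (phi : biform) (x : T) : Prop :=
  match phi with
  | BVar p => V p x
  | BBot => False
  | BTop => True
  | BAnd a b => sat le V a x /\ sat le V b x
  | BOr a b => sat le V a x \/ sat le V b x
  | BImp a b => forall y, le x y -> sat le V a y -> sat le V b y
  | BCoimp a b => exists y, le y x /\ sat le V a y /\ ~ sat le V b y
  end.

Definition validates (T : finType) (le : rel T) (phi : biform) : Prop :=
  forall V, is_valuation le V -> forall x, sat le V phi x.

Definition refutes (T : finType) (le : rel T) (phi : biform) : Prop :=
  exists V, is_valuation le V /\ exists x, ~ sat le V phi x.

Definition bi_p_morphism (T : finType) (le : rel T) (U : finType) (leU : rel U)
    (f : T -> U) : Prop :=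
  [/\ (forall x y, le x y -> leU (f x) (f y)),
      (forall x u, leU (f x) u -> exists z, le x z /\ f z = u) &
      (forall x u, leU u (f x) -> exists z, le z x /\ f z = u)].

(* The frame F_3 on 'I_4: point 0 is the top a; 1, 2, 3 are b, c, d. *)
Definition F3_le : rel 'I_4 := fun i j => (i == j) || (j == ord0).

(* phi behaves like the Jankov formula J(F_3) on finite co-trees *)
Definition jankov_F3_like (phi : biform) : Prop :=
  forall (T : finType) (le : rel T), is_cotree le ->
    (refutes le phi <->
     exists f : T -> 'I_4, bi_p_morphism le F3_le f /\ (forall u : 'I_4, exists x, f x = u)).

(* Main.v *)
Require Import Defs.
From mathcomp Require Import all_boot.

Section S.
Variables (X : finType) (le : rel X).
Hypothesis HX : is_cotree le.

Lemma ip_between {y x w} : imm_pred le y x -> le y w -> le w x -> w = y \/ w = x.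
Proof.
case/and3P=> _ _ /existsPn H yw wx.
have := H w; rewrite yw wx /= negb_and !negbK.
by case/orP=> /eqP ->; auto.
Qed.

Lemma ip_notge {y x} : imm_pred le y x -> ~~ le x y.
Proof.
case: HX => [[_ asym _] _ _].
case/and3P=> yx ne _; apply/negP=> xy.
by move/eqP: ne; apply; apply: asym; rewrite yx xy.
Qed.

Lemma ip_nolow {y1 y2 x z} : imm_pred le y1 x -> imm_pred le y2 x -> y1 != y2 ->
  le z y1 -> le z y2 -> False.
Proof.
move=> h1 h2 ne z1 z2.
case: HX => [[_ asym tr] _ cmp].
have := cmp _ _ _ z1 z2; case/orP=> h.
- have y2x : le y2 x by case/and3P: h2.
  case: (ip_between h1 h y2x) => e; first by rewrite e eqxx in ne.
  by case/and3P: h2 => _; rewrite e eqxx.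
- have y1x : le y1 x by case/and3P: h1.
  case: (ip_between h2 h y1x) => e; first by rewrite e eqxx in ne.
  by case/and3P: h1 => _; rewrite e eqxx.
Qed.

Lemma mainconstr x y1 y2 y3 : imm_pred le y1 x -> imm_pred le y2 x -> imm_pred le y3 x ->
  y1 != y2 -> y2 != y3 -> y3 != y1 ->
  exists f : X -> 'I_4, bi_p_morphism le F3_le f /\ (forall u : 'I_4, exists z, f z = u).
Proof.
move=> h1 h2 h3 n12 n23 n31.
have [[refl asym tr] [t top] cmp] := HX.
have y1x : le y1 x by case/and3P: h1.
have y2x : le y2 x by case/and3P: h2.
have y3x : le y3 x by case/and3P: h3.
have ng1 := ip_notge h1. have ng2 := ip_notge h2. have ng3 := ip_notge h3.
have claimA : forall y z w, imm_pred le y x -> le z y -> ~~ le x w -> le z w -> le w y.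
  move=> y z w hy zy xw zw.
  have yx : le y x by case/and3P: hy.
  case/orP: (cmp _ _ _ zy zw) => // yw.
  case/orP: (cmp _ _ _ yx yw) => xw'; first by rewrite xw' in xw.
  case: (ip_between hy yw xw') => e.
    by subst w; apply: refl.
  by subst w; rewrite refl in xw.
have n13 : y1 != y3 by rewrite eq_sym.
pose a0 : 'I_4 := @Ordinal 4 0 isT.
pose a1 : 'I_4 := @Ordinal 4 1 isT.
pose a2 : 'I_4 := @Ordinal 4 2 isT.
pose a3 : 'I_4 := @Ordinal 4 3 isT.
pose f z := if le x z then a0 else if le z y1 then a1 else if le z y2 then a2 else a3.
have fy1 : f y1 = a1 by rewrite /f (negbTE ng1) refl.
have fy2 : f y2 = a2.
  rewrite /f (negbTE ng2) (refl y2); case: ifP => // h.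
  by case: (ip_nolow h1 h2 n12 h (refl _)).
have fy3 : f y3 = a3.
  rewrite /f (negbTE ng3); case: ifP => h.
    by case: (ip_nolow h1 h3 n13 h (refl _)).
  case: ifP => // h'.
  by case: (ip_nolow h2 h3 n23 h' (refl _)).
have fx : forall z, le x z -> f z = a0 by move=> z xz; rewrite /f xz.
have fx0 : forall z, f z = a0 -> le x z by move=> z; rewrite /f; do 3 case: ifP => //.
exists f; split; last first.
  case=> [[|[|[|[|n]]]] Hu].
  - by exists x; apply: val_inj; rewrite fx.
  - by exists y1; apply: val_inj; rewrite fy1.
  - by exists y2; apply: val_inj; rewrite fy2.
  - by exists y3; apply: val_inj; rewrite fy3.
  - by [].
split.
- move=> z w zw; rewrite /F3_le.
  case xw : (le x w); first by rewrite (fx w xw) orbT.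
  have xz : le x z = false by apply/negP=> xz; rewrite (tr _ _ _ xz zw) in xw.
  rewrite /f xz xw; case: ifP => zy1.
    by rewrite (claimA _ _ _ h1 zy1 (negbT xw) zw).
  case: ifP => zy2.
    have wy2 := claimA _ _ _ h2 zy2 (negbT xw) zw.
    case: ifP => wy1; last by rewrite wy2.
    by rewrite (tr _ _ _ zw wy1) in zy1.
  case: ifP => wy1; first by rewrite (tr _ _ _ zw wy1) in zy1.
  case: ifP => wy2; first by rewrite (tr _ _ _ zw wy2) in zy2.
  by [].
- move=> z u; rewrite /F3_le; case/orP=> /eqP e.
    by exists z; split.
  by exists t; split => //; rewrite e fx //; apply: val_inj.
- move=> z u; rewrite /F3_le; case/orP=> /eqP e.
    by exists z; split.
  have xz : le x z by apply: fx0; rewrite e; apply: val_inj.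
  move: u e; case=> [[|[|[|[|n]]]] Hu] e.
  + by exists z; split => //; rewrite e; apply: val_inj.
  + by exists y1; split; [exact: tr y1x xz | rewrite fy1; apply: val_inj].
  + by exists y2; split; [exact: tr y2x xz | rewrite fy2; apply: val_inj].
  + by exists y3; split; [exact: tr y3x xz | rewrite fy3; apply: val_inj].
  + by [].
Qed.

End S.

Theorem lemma3p8 (phi : biform) (Hphi : jankov_F3_like phi)
  (X : finType) (le : rel X) (HX : is_cotree le) (Hval : validates le phi) :
  forall x : X, #|[set y | imm_pred le y x]| <= 2.
Proof.
move=> x; rewrite leqNgt; apply/negP=> /card_gt2P [y1 [y2 [y3 [[i1 i2 i3] [n12 n23 n31]]]]].
rewrite !inE in i1 i2 i3.
have [V [HV [z nz]]] : refutes le phi.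
  apply (proj2 (Hphi X le HX)). exact: (mainconstr X le HX x y1 y2 y3 i1 i2 i3 n12 n23 n31).
exact: nz (Hval V HV z).
Qed.
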